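(* Let $I$ be a finite set, $T$ a tree on $I$ with $n$ inner vertices, fix a nice total order on $\mathcal{V}(T)$ with associated edge-labeling $\lambda$, and let $m:\hat{0}=x_0\lhd x_1\lhd\dots\lhd x_n=T$ be the unique maximal chain of $[\hat{0},T]$ with increasing labels. For $i\in[n]$ let $\mathsf{A}_i=\{a \text{ atom}: a\le x_i,\ a\not\le x_{i-1}\}$ and $\mathsf{B}_i=\{a\text{ atom}: \lambda(\hat{0},a)=i\}$. Then $\mathsf{A}_i=\mathsf{B}_i$ for every $i\in[n]$.
   Context: A tree on a finite set $I$ is a (non-planar) rooted binary tree whose leaves are bijectively labeled by $I$: vertices are inner vertices (valence $3$) and leaves and the root (valence $1$), edges oriented towards the root; one-leaf trees are allowed. A forest on $I$ is a set of trees whose leaf sets partition $I$; $\mathcal{V}(F)$ is its set of inner vertices. For forests $F,G$ on $I$, $F \leq G$ if there is a continuous map $F\to G$ which (D1) is increasing with respect to orientation towards the root, (D2) maps inner vertices to inner vertices injectively, (D3) is the identity of $I$ on leaves, (D4) is injective on each tree of $F$. This gives the poset $\operatorname{For}(I)$, graded by number of inner vertices, with minimum $\hat{0}$ (no inner vertices); $[\hat{0},T]$ is a lattice. For $F \leq G \leq T$ inner vertices are regarded as subsets $\mathcal{V}(F)\subseteq\mathcal{V}(G)\subseteq\mathcal{V}(T)$; if $F\lhd G$ there is a unique $v$ with $\mathcal{V}(G)=\mathcal{V}(F)\cup\{v\}$. Partial order on $\mathcal{V}(T)$: $v\preceq v'$ if $v'$ lies on the path between the root and $v$. A nice total order is any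 total order on $\mathcal{V}(T)$ extending $\preceq$; using it the inner vertices are labeled $1,\dots,n$ increasingly and identified with their labels. The edge-labeling is $\lambda(F,G)$ := the unique element of $\mathcal{V}(G)\setminus\mathcal{V}(F)$ for $F\lhd G$ in $[\hat{0},T]$. Atoms are the elements covering $\hat{0}$. *)

(* Defs.v *)
From mathcomp Require Import all_boot.
Set Implicit Arguments. Unset Strict Implicit. Unset Printing Implicit Defensive.

Section Forests.
Variable I : finType.

(* A forest on I is encoded by the set of leaf sets ("clusters") of its inner
   vertices; leaves are the singletons [set x]. *)
Definition verts (F : {set {set I}}) : {set {set I}} :=
  F :|: [set [set x] | x : I].

Definition child (F : {set {set I}}) (P C : {set I}) : Prop :=
  C \in F /\ P \in verts F /\ P \proper C /\
  ~ (exists Q, Q \in verts F /\ P \proper Q /\ Q \proper C).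

Definition is_forest (F : {set {set I}}) : Prop :=
  (forall C, C \in F -> 2 <= #|C|) /\
  (forall C D, C \in F -> D \in F -> [\/ C \subset D, D \subset C | [disjoint C & D]]) /\
  (forall C, C \in F -> exists P1 P2, [/\ P1 != P2, child F P1 C, child F P2 C &
       forall P, child F P C -> P = P1 \/ P = P2]).

Definition is_tree (T : {set {set I}}) : Prop :=
  is_forest T /\ (setT \in T \/ #|I| = 1).

(* Discrete form of a map F -> G satisfying (D1)-(D4): phi sends inner
   vertices of F injectively to inner vertices of G (leaves to themselves);
   the two children of an inner vertex C of F are sent below two distinct
   children of phi C (this is monotonicity plus injectivity on each tree). *)
Definition img (F : {set {set I}}) (phi : {set I} -> {set I}) (P : {set I}) :=
  if P \in F then phi P else P.

Definition forest_map (F G : {set {set I}}) (phi : {set I} -> {set I}) : Prop :=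
  (forall C, C \in F -> phi C \in G) /\
  {in F &, injective phi} /\
  (forall C P1 P2, child F P1 C -> child F P2 C -> P1 != P2 ->
     exists Q1 Q2, [/\ Q1 != Q2, child G Q1 (phi C), child G Q2 (phi C),
                      img F phi P1 \subset Q1 & img F phi P2 \subset Q2]).

Definition fle (F G : {set {set I}}) : Prop :=
  is_forest F /\ is_forest G /\ exists phi, forest_map F G phi.

Definition fcover (F G : {set {set I}}) : Prop :=
  fle F G /\ F <> G /\ forall H, fle F H -> fle H G -> H = F \/ H = G.

Definition atomT (T a : {set {set I}}) : Prop := fle a T /\ fcover set0 a.

(* edge label lambda(F,G) = v, inner vertices of F,G viewed inside V(T)
   through their maps to T *)
Definition lam (T F G : {set {set I}}) (v : {set I}) : Prop :=
  exists phiF phiG, [/\ forest_map F T phiF, forest_map G T phiG,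
    v \notin phiF @: F & phiG @: G = v |: phiF @: F].

(* a nice total order on V(T), given by its labelling 1..n *)
Definition nice_labelling (T : {set {set I}}) (n : nat) (lab : {set I} -> nat) : Prop :=
  {in T &, injective lab} /\
  (forall v, v \in T -> 1 <= lab v <= n) /\
  (forall v w, v \in T -> w \in T -> v \proper w -> lab v < lab w).

End Forests.

(* Main.v *)
Require Import Defs.
From mathcomp Require Import all_boot.
Set Implicit Arguments. Unset Strict Implicit. Unset Printing Implicit Defensive.

Section H.
Variable I : finType.
Implicit Types (F G T : {set {set I}}) (C D P Q R : {set I}).

Lemma verts_ne F P : is_forest F -> P \in verts F -> exists x, x \in P.
Proof.
case=> hc _; rewrite /verts inE => /orP[/hc h|/imsetP[y _ ->]].
  by apply/card_gt0P; apply: leq_trans h.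
by exists y; rewrite set11.
Qed.

Lemma in_verts F P : P \in F -> P \in verts F.
Proof. by rewrite /verts inE => ->. Qed.

Lemma single_verts F x : [set x] \in verts F.
Proof. by rewrite /verts inE; apply/orP; right; apply/imsetP; exists x. Qed.

Lemma lam_verts F X Y x : is_forest F -> X \in verts F -> Y \in verts F ->
  x \in X -> x \in Y -> X \subset Y \/ Y \subset X.
Proof.
case=> _ [hl _]; rewrite /verts !inE => /orP[hX|/imsetP[y _ ->]].
  move=> /orP[hY|/imsetP[z _ ->]].
    move=> xX xY; case: (hl _ _ hX hY) => [h|h|hd]; auto.
    by rewrite (disjointFr hd xX) in xY.
  by move=> xX; rewrite inE => /eqP e; right; rewrite sub1set -e.
by move=> _; rewrite inE => /eqP e xY; left; rewrite sub1set -e.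
Qed.

Lemma maximal F D E : D \in verts F -> E \in F -> D \proper E ->
  exists Q, child F Q E /\ D \subset Q.
Proof.
move=> hD hE hDE.
have P0 : (D \in verts F) && (D \subset D) && (D \proper E) by rewrite hD subxx hDE.
case: (@arg_maxnP _ D (fun Q => (Q \in verts F) && (D \subset Q) && (Q \proper E)) (fun Q => #|Q|) P0) => Q /andP[/andP[hQ hDQ] hQE] hmax.
exists Q; split => //; split => //; split => //; split => //.
case=> R [hR [hQR hRE]].
have := hmax R; rewrite hR (subset_trans hDQ (proper_sub hQR)) hRE => /(_ isT).
by move=> h; move: (proper_card hQR); rewrite ltnNge; move: h => /= ->.
Qed.

Lemma child_eq F Q Q' C x : is_forest F -> child F Q C -> child F Q' C ->
  x \in Q -> x \in Q' -> Q = Q'.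
Proof.
move=> hF [hC [hQ [hQC hnQ]]] [_ [hQ' [hQ'C hnQ']]] xQ xQ'.
case: (lam_verts hF hQ hQ' xQ xQ') => hs.
  case: (eqVneq Q Q') => // ne; exfalso; apply: hnQ; exists Q'.
  by split=> //; split=> //; rewrite properEneq ne hs.
case: (eqVneq Q' Q) => // ne; exfalso; apply: hnQ'; exists Q.
by split=> //; split=> //; rewrite properEneq ne hs.
Qed.

Lemma two_children F C Q1 Q2 R : is_forest F -> C \in F -> Q1 != Q2 ->
  child F Q1 C -> child F Q2 C -> child F R C -> R = Q1 \/ R = Q2.
Proof.
move=> hF hC ne h1 h2 hR; case: hF => _ [_ h] .
case: (h C hC) => P1 [P2 [_ _ _ hu]].
move: ne; case: (hu _ h1) => ->; case: (hu _ h2) => ->; case: (hu _ hR) => ->;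
  rewrite ?eqxx // => _; auto.
Qed.

Lemma child_union F C Q1 Q2 : is_forest F -> Q1 != Q2 ->
  child F Q1 C -> child F Q2 C -> C = Q1 :|: Q2.
Proof.
move=> hF ne h1 h2; have hC : C \in F by case: h1.
apply/eqP; rewrite eqEsubset; apply/andP; split; last first.
  by rewrite subUset (proper_sub h1.2.2.1) (proper_sub h2.2.2.1).
apply/subsetP => x xC.
have hx : [set x] \proper C.
  rewrite properE sub1set xC /=; apply/negP => /subset_leq_card.
  rewrite cards1; case: hF => hc _; have := hc _ hC; case: #|C| => [|[|]] //.
case: (maximal (single_verts F x) hC hx) => Q [hQ]; rewrite sub1set => xQ.
by rewrite inE; case: (two_children hF hC ne h1 h2 hQ) => <-; rewrite xQ ?orbT.
Qed.

Lemma child_sub F Q C : child F Q C -> Q \subset C.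
Proof. by case=> _ [_ [/proper_sub]]. Qed.

Lemma img_sup F G phi : is_forest F -> forest_map F G phi ->
  forall P, P \subset img F phi P.
Proof.
move=> hF [_ [_ hm]].
suff H : forall k C, #|C| < k -> C \in F -> C \subset phi C.
  by move=> P; rewrite /img; case: ifP => // hP; apply: (H _ _ (ltnSn _) hP).
elim=> // k IH C hk hC.
have [P1 [P2 [ne h1 h2 _]]] := hF.2.2 C hC.
rewrite {1}(child_union hF ne h1 h2).
have [Q1 [Q2 [_ hQ1 hQ2 s1 s2]]] := hm C P1 P2 h1 h2 ne.
have sP : forall P Q, child F P C -> img F phi P \subset Q -> child G Q (phi C) ->
    P \subset phi C.
  move=> P Q hP sPQ hQ; apply: subset_trans (child_sub hQ).
  apply: subset_trans sPQ; rewrite /img; case: ifP => // hPF.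
  apply: IH hPF; rewrite -ltnS; apply: leq_trans hk; rewrite ltnS; exact: proper_card hP.2.2.1.
by rewrite subUset (sP _ _ h1 s1 hQ1) (sP _ _ h2 s2 hQ2).
Qed.


Definition sep G v p q := exists R1 R2,
  [/\ R1 != R2, child G R1 v, child G R2 v, p \in R1 & q \in R2].

Lemma eq_sym_ne (X Y : {set I}) : X != Y -> Y != X.
Proof. by rewrite eq_sym. Qed.

Lemma sep_in G v p q : sep G v p q -> v \in G.
Proof. by case=> R1 [R2 [_ [h _] _ _ _]]. Qed.

Lemma sep_uniq G v w p q : is_forest G -> sep G v p q -> sep G w p q -> v = w.
Proof.
move=> hG.
wlog: v w / v \subset w.
  move=> Hw hv hw.
  have pv : p \in v.
    by case: hv => R1 [R2 [_ h1 _ p1 _]]; apply: (subsetP (child_sub h1)).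
  have pw : p \in w.
    by case: hw => R1 [R2 [_ h1 _ p1 _]]; apply: (subsetP (child_sub h1)).
  case: (lam_verts hG (in_verts (sep_in hv)) (in_verts (sep_in hw)) pv pw) => s.
    exact: Hw.
  by symmetry; apply: Hw.
move=> s hv hw; case: (eqVneq v w) => // ne.
have pr : v \proper w by rewrite properEneq ne s.
case: (maximal (in_verts (sep_in hv)) (sep_in hw) pr) => Q [hQ sQ].
case: hv => R1 [R2 [_ h1 h2 p1 q2]].
case: hw => S1 [S2 [ne' g1 g2 p1' q2']].
have pQ : p \in Q by apply: (subsetP sQ); apply: (subsetP (child_sub h1)).
have qQ : q \in Q by apply: (subsetP sQ); apply: (subsetP (child_sub h2)).
have e1 := child_eq hG hQ g1 pQ p1'.
have e2 := child_eq hG hQ g2 qQ q2'.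
by rewrite -e1 -e2 eqxx in ne'.
Qed.

Lemma sep_map F G phi C p q : is_forest F -> forest_map F G phi ->
  sep F C p q -> sep G (phi C) p q.
Proof.
move=> hF hm [R1 [R2 [ne h1 h2 p1 q2]]].
have [_ [_ hc]] := hm.
have [Q1 [Q2 [ne' g1 g2 s1 s2]]] := hc C R1 R2 h1 h2 ne.
exists Q1, Q2; split => //.
  by apply: (subsetP s1); apply: (subsetP (img_sup hF hm R1)).
by apply: (subsetP s2); apply: (subsetP (img_sup hF hm R2)).
Qed.

Lemma map_uniq F T phi psi : is_forest F -> is_forest T ->
  forest_map F T phi -> forest_map F T psi -> {in F, phi =1 psi}.
Proof.
move=> hF hT hp hq C hC.
have [P1 [P2 [ne h1 h2 _]]] := hF.2.2 C hC.
have [p pP] := verts_ne hF h1.2.1.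
have [q qP] := verts_ne hF h2.2.1.
have hs : sep F C p q by exists P1, P2.
exact: sep_uniq hT (sep_map hF hp hs) (sep_map hF hq hs).
Qed.

Lemma lemM F T phi C P P' Q Q' : is_forest F -> is_forest T -> forest_map F T phi ->
  child F P C -> child F P' C -> P != P' ->
  child T Q (phi C) -> child T Q' (phi C) -> Q != Q' ->
  img F phi P \subset Q -> img F phi P' \subset Q' -> Q \in verts F -> P = Q.
Proof.
move=> hF hT hm hP hP' ne hQ hQ' ne' s s' hQv.
have hC : C \in F by case: hP.
have [x xP] := verts_ne hF hP.2.1.
have [y yP'] := verts_ne hF hP'.2.1.
have xQ : x \in Q by apply: (subsetP s); apply: (subsetP (img_sup hF hm P)).
have yQ' : y \in Q' by apply: (subsetP s'); apply: (subsetP (img_sup hF hm P')).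
have xC : x \in C by apply: (subsetP (child_sub hP)).
have yC : y \in C by apply: (subsetP (child_sub hP')).
have nCQ : ~ C \subset Q.
  move=> sCQ; have yQ : y \in Q by apply: (subsetP sCQ).
  by move: ne'; rewrite (child_eq hT hQ hQ' yQ yQ') eqxx.
case: (lam_verts hF hQv (in_verts hC) xQ xC) => // sQC.
have pr : Q \proper C.
  rewrite properEneq sQC andbT; apply/eqP => e; apply: nCQ; by rewrite e.
case: (maximal hQv hC pr) => P'' [h'' sQ''].
case: (two_children hF hC ne hP hP' h'') => e; subst P''.
  apply/eqP; rewrite eqEsubset sQ'' andbT.
  by apply: subset_trans (img_sup hF hm P) s.
have xP' : x \in P' by apply: (subsetP sQ'').
by move: ne; rewrite (child_eq hF hP hP' xP xP') eqxx.
Qed.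


Lemma struct F T phi : is_forest F -> is_forest T -> forest_map F T phi ->
  (forall v w, v \in T -> w \in phi @: F -> v \proper w -> v \in phi @: F) ->
  forall u, u \in phi @: F -> u \in F /\ (forall R, child T R u -> child F R u).
Proof.
move=> hF hT hm hdown.
suff H : forall k (u : {set I}), #|u| < k -> u \in phi @: F ->
    u \in F /\ (forall R, child T R u -> child F R u).
  by move=> u; apply: (H _ _ (ltnSn _)).
elim=> // k IH u hk hu.
have hu' := hu; case/imsetP: hu' => C hC eu; subst u.
have [P1 [P2 [ne h1 h2 _]]] := hF.2.2 C hC.
have [_ [_ hc]] := hm.
have [Q1 [Q2 [ne' g1 g2 s1 s2]]] := hc C P1 P2 h1 h2 ne.
have hQv : forall Q, child T Q (phi C) -> Q \in verts F.
  move=> Q g; have := g.2.1; rewrite /verts inE => /orP[hQT|hs]; last first.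
    by rewrite inE hs orbT.
  have hQW : Q \in phi @: F by apply: hdown hQT hu g.2.2.1.
  apply: in_verts; apply: (IH Q _ hQW).1.
  rewrite -ltnS; apply: leq_trans hk; rewrite ltnS; exact: proper_card g.2.2.1.

have e1 := lemM hF hT hm h1 h2 ne g1 g2 ne' s1 s2 (hQv _ g1).
have e2 := lemM hF hT hm h2 h1 (eq_sym_ne ne) g2 g1 (eq_sym_ne ne') s2 s1 (hQv _ g2).
have eC : phi C = C.
  by rewrite (child_union hT ne' g1 g2) (child_union hF ne h1 h2) e1 e2.
split; first by rewrite eC.
move=> R hR; case: (two_children hT g1.1 ne' g1 g2 hR) => ->.
  by rewrite -e1 eC.
by rewrite -e2 eC.
Qed.


Definition A2 (p q : I) : {set {set I}} := [set [set p; q]].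

Lemma verts_A2 p q P : P \in verts (A2 p q) -> P = [set p; q] \/ exists y, P = [set y].
Proof.
rewrite /verts /A2 !inE => /orP[/eqP->|/imsetP[y _ ->]]; [left|right; exists y] => //.
Qed.

Lemma single_proper (x y : I) (R : {set I}) : [set x] \proper R -> R = [set y] -> False.
Proof. by move=> /proper_card + e; rewrite e !cards1. Qed.

Lemma child_A2 p q P : p != q ->
  child (A2 p q) P [set p; q] <-> P = [set p] \/ P = [set q].
Proof.
move=> npq; split.
  case=> _ [hP [pr _]]; case: (verts_A2 hP) => [e|[y e]].
    by move: pr; rewrite e properE subxx.
  have : y \in [set p; q] by rewrite -sub1set -e; exact: proper_sub pr.
  by rewrite !inE => /orP[/eqP ey|/eqP ey]; [left|right]; rewrite e ey.
have key : forall x z, x != z -> child (A2 x z) [set x] [set x; z].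
  move=> x z nxz; split; first by rewrite /A2 set11.
  split; first exact: single_verts.
  split.
    rewrite properE sub1set !inE eqxx /=; apply/negP => /subsetP /(_ z).
    by rewrite !inE eqxx orbT => /(_ isT) /eqP e; move: nxz; rewrite e eqxx.
  case=> Q [hQ [pr1 pr2]]; case: (verts_A2 hQ) => [e|[y e]].
    by move: pr2; rewrite e properE subxx.
  exact: single_proper pr1 e.
case=> ->; first exact: key.
have -> : [set p; q] = [set q; p] by rewrite setUC.
have -> : A2 p q = A2 q p by rewrite /A2 setUC.
by apply: key; rewrite eq_sym.
Qed.

Lemma set1_neq (p q : I) : p != q -> [set p] != [set q].
Proof.
move=> npq; apply/negP => /eqP e; have : p \in [set q] by rewrite -e set11.
by rewrite inE (negbTE npq).
Qed.

Lemma A2_forest p q : p != q -> is_forest (A2 p q).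
Proof.
move=> npq; split.
  by move=> C; rewrite /A2 inE => /eqP ->; rewrite cards2 npq.
split.
  by move=> C D; rewrite /A2 !inE => /eqP -> /eqP ->; constructor 1.
move=> C; rewrite /A2 inE => /eqP ->; exists [set p], [set q]; split.
- exact: set1_neq.
- by apply/child_A2 => //; left.
- by apply/child_A2 => //; right.
- by move=> P /child_A2 => /(_ npq).
Qed.

Lemma notin_A2 p q x : p != q -> [set x] \notin A2 p q.
Proof.
move=> npq; rewrite /A2 inE; apply/negP => /eqP e.
have := cards1 x; rewrite e cards2 npq; by [].
Qed.

Lemma A2_map_sep G psi p q : p != q -> forest_map (A2 p q) G psi ->
  sep G (psi [set p; q]) p q.
Proof.
move=> npq [_ [_ hc]].
have h1 : child (A2 p q) [set p] [set p; q] by apply/child_A2 => //; left.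
have h2 : child (A2 p q) [set q] [set p; q] by apply/child_A2 => //; right.
have [Q1 [Q2 [ne g1 g2 s1 s2]]] := hc _ _ _ h1 h2 (set1_neq npq).
exists Q1, Q2; split => //.
  by move: s1; rewrite /img (negbTE (notin_A2 p npq)) sub1set.
by move: s2; rewrite /img (negbTE (notin_A2 q npq)) sub1set.
Qed.

Lemma sep_A2_map G v p q : p != q -> sep G v p q ->
  forest_map (A2 p q) G (fun _ => v).
Proof.
move=> npq hs; split; first by move=> _ _; exact: sep_in hs.
split; first by move=> C D; rewrite /A2 !inE => /eqP -> /eqP ->.
move=> C P1 P2; rewrite -/(A2 p q) => h1 h2 ne.
have hC : C = [set p; q] by move: h1 => [] ; rewrite /A2 inE => /eqP.
subst C.
case: hs => R1 [R2 [ne' g1 g2 pR qR]].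
have imgE : forall x, img (A2 p q) (fun _ => v) [set x] = [set x].
  by move=> x; rewrite /img (negbTE (notin_A2 x npq)).
move: ne; case/(child_A2 _ npq): h1 => ->; case/(child_A2 _ npq): h2 => ->;
  rewrite ?eqxx // => _.
- by exists R1, R2; split => //; rewrite imgE sub1set.
- by exists R2, R1; split => //; rewrite ?imgE ?sub1set // eq_sym.
Qed.

Lemma fle_A2 G p q : p != q ->
  fle (A2 p q) G <-> is_forest G /\ exists v, sep G v p q.
Proof.
move=> npq; split.
  case=> _ [hG [psi hm]]; split => //; exists (psi [set p; q]).
  exact: A2_map_sep.
case=> hG [v hv]; split; first exact: A2_forest.
split => //; exists (fun _ => v); exact: sep_A2_map.
Qed.


Lemma forest0 : is_forest (set0 : {set {set I}}).
Proof. by split; [|split] => C; rewrite inE. Qed.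

Lemma map0 G phi : forest_map set0 G phi.
Proof.
split; first by move=> C; rewrite inE.
split; first by move=> C; rewrite inE.
by move=> C P1 P2 [] ; rewrite inE.
Qed.

Lemma fle0 G : is_forest G -> fle set0 G.
Proof. move=> hG; split; first exact: forest0. by split => //; exists id; apply: map0. Qed.

Lemma verts_single F P : P \in verts F -> P \notin F -> exists y, P = [set y].
Proof.
by rewrite /verts inE => /orP[->//|/imsetP[y _ ->]] _; exists y.
Qed.

Lemma atom_A2 T a : atomT T a -> exists p q, p != q /\ a = A2 p q.
Proof.
case=> _ [[_ [ha _]] [ne hmax]].
case: (set_0Vmem a) => [e|[C0 hC0]]; first by case: ne.
case: (@arg_minnP _ C0 (fun C => C \in a) (fun C => #|C|) hC0) => M hM hmin.
have [P1 [P2 [nP h1 h2 hu]]] := ha.2.2 M hM.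
have sgl : forall P, child a P M -> exists y, P = [set y].
  move=> P hP; apply: (verts_single hP.2.1); apply/negP => hPa.
  have := hmin P hPa; rewrite leqNgt; move/negP; apply.
  exact: proper_card hP.2.2.1.
have [p1 e1] := sgl _ h1; have [p2 e2] := sgl _ h2.
have np : p1 != p2 by apply: contraNneq nP => e; rewrite e1 e2 e.
have eM : M = [set p1; p2] by rewrite (child_union ha nP h1 h2) e1 e2.
exists p1, p2; split => //.
have hcA : forall P, child (A2 p1 p2) P [set p1; p2] -> child a P M.
  by move=> P /(child_A2 _ np) [] ->; rewrite -?e1 -?e2.
have hH : fle (A2 p1 p2) a.
  split; first exact: A2_forest.
  split => //; exists id; split.
    by move=> C; rewrite /A2 inE => /eqP ->; rewrite -eM.
  split; first by move=> C D; rewrite /A2 !inE => /eqP -> /eqP ->.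
  move=> C Q1 Q2 g1; have eC : C = [set p1; p2] by move: g1.1; rewrite /A2 inE => /eqP.
  subst C => g2 nQ; exists Q1, Q2; split => //.
  - by rewrite /= -eM; apply: hcA.
  - by rewrite /= -eM; apply: hcA.
  - have [y ->] : exists y, Q1 = [set y] by case/(child_A2 _ np): g1 => ->; eexists.
    by rewrite /img (negbTE (notin_A2 y np)).
  - have [y ->] : exists y, Q2 = [set y] by case/(child_A2 _ np): g2 => ->; eexists.
    by rewrite /img (negbTE (notin_A2 y np)).
case: (hmax _ (fle0 (A2_forest np)) hH) => // e.
by have := set11 [set p1; p2]; rewrite -/(A2 p1 p2) e inE.
Qed.

End H.

From mathcomp Require Import zify.

Lemma lam_A2 (I : finType) (T : {set {set I}}) p q v : p != q ->
  lam T set0 (A2 p q) v <-> sep T v p q.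
Proof.
move=> npq; split.
  case=> phiF [phiG [mF mG _ e]].
  move: e; rewrite imset0 setU0 /A2 imset_set1 => /set1_inj e.
  by rewrite -e; apply: A2_map_sep.
move=> hs; exists id, (fun _ => v); split.
- exact: map0.
- exact: sep_A2_map.
- by rewrite imset0 inE.
- by rewrite imset0 setU0 /A2 imset_set1.
Qed.

Theorem lemma5p5 (I : finType) (T : {set {set I}}) (n : nat)
  (lab : {set I} -> nat) (x : nat -> {set {set I}}) :
  is_tree T -> #|T| = n -> nice_labelling T n lab ->
  (* x is a maximal chain 0 = x_0 <| x_1 <| ... <| x_n = T in [0,T] *)
  x 0 = set0 -> x n = T ->
  (forall i, i < n -> fle (x i.+1) T /\ fcover (x i) (x i.+1)) ->
  (* with increasing labels *)
  (exists l : nat -> {set I},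
     (forall i, 1 <= i <= n -> l i \in T /\ lam T (x i.-1) (x i) (l i)) /\
     (forall i j, 1 <= i -> i < j -> j <= n -> lab (l i) < lab (l j))) ->
  forall i, 1 <= i <= n ->
  forall a, atomT T a ->
    ((fle a (x i) /\ ~ fle a (x i.-1)) <->
     (exists v, [/\ v \in T, lab v = i & lam T set0 a v])).
Proof.
move=> hT _ [hinj [hrange hmono]] hx0 _ hchain [l [hl hinc]] i hi a ha.
have hTf : is_forest T := hT.1.
have flex : forall j, j <= n -> fle (x j) T.
  by case=> [|j] hj; [rewrite hx0; exact: fle0 | exact: (hchain j hj).1].
have lower : forall j, 1 <= j -> j <= n -> j <= lab (l j).
  elim=> // j IH _ hj; case: j IH hj => [|j] IH hj.
    by have /andP[] := hrange _ (hl 1 ltac:(lia)).1.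
  have := hinc j.+1 j.+2 isT (ltnSn _) hj.
  have := IH isT (ltnW hj); lia.
have upper : forall k, k < n -> lab (l (n - k)) <= n - k.
  elim=> [|k IH] hk.
    rewrite subn0; have := hrange _ (hl n ltac:(lia)).1; lia.
  have := IH (ltnW hk).
  have := hinc (n - k.+1) (n - k) ltac:(lia) ltac:(lia) ltac:(lia); lia.
have labl : forall j, 1 <= j <= n -> lab (l j) = j.
  move=> j /andP[j1 jn]; have := lower j j1 jn.
  have := upper (n - j) ltac:(lia); rewrite subKn //; lia.
pose W j := [set v in T | lab v <= j].
have Wstep : forall j, 1 <= j <= n -> W j = l j |: W j.-1.
  move=> j hj; have lT := (hl j hj).1; have lj := labl j hj.
  apply/setP => v; rewrite !inE.
  case: (eqVneq v (l j)) => [->|nv] /=; first by rewrite lT lj leqnn.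
  case vT : (v \in T) => //=.
  have : lab v != j by apply: contra nv => /eqP e; apply/eqP; apply: hinj => //; lia.
  lia.
have imgW : forall j, j <= n -> forall phi, forest_map (x j) T phi -> phi @: x j = W j.
  elim=> [|j IH] hj phi hm.
    rewrite hx0 imset0; apply/setP => v; rewrite !inE.
    by case vT : (v \in T) => //=; have := hrange v vT; lia.
  have hj' : 1 <= j.+1 <= n by lia.
  have [_ [phiF [phiG [mF mG _ e]]]] := hl j.+1 hj'.
  have hxf := (flex j.+1 hj).1.
  rewrite (eq_in_imset (map_uniq hxf hTf hm mG)) e (IH (ltnW hj) _ mF).
  by rewrite (Wstep j.+1 hj').
have [p [q [npq ea]]] := atom_A2 ha; subst a.
have [_ [u hu]] := (fle_A2 T npq).1 ha.1.
have uT := sep_in hu.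
have key : forall j, j <= n -> (fle (A2 p q) (x j) <-> lab u <= j).
  move=> j hj; have [hxj [_ [phi hm]]] := flex j hj.
  have eW := imgW j hj phi hm.
  rewrite fle_A2 //; split.
    case=> _ [C hC].
    have e := sep_uniq hTf (sep_map hxj hm hC) hu.
    have : u \in phi @: x j by apply/imsetP; exists C => //; exact: sep_in hC.
    by rewrite eW inE => /andP[].
  move=> hle; split => //.
  have huW : u \in phi @: x j by rewrite eW inE uT hle.
  have hdown : forall v w, v \in T -> w \in phi @: x j -> v \proper w -> v \in phi @: x j.
    move=> v w vT; rewrite eW !inE => /andP[wT wl] pr.
    by rewrite vT /=; have := hmono v w vT wT pr; lia.
  have [_ hch] := struct hxj hTf hm hdown huW.
  exists u; case: hu => R1 [R2 [ne g1 g2 pR qR]]; exists R1, R2; split => //; exact: hch.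
rewrite (key i ltac:(lia)) (key i.-1 ltac:(lia)); split.
  case=> h1 h2; exists u; split => //; first lia.
  exact/(lam_A2 _ _ npq).
case=> v [vT lv /(lam_A2 _ _ npq) hv].
rewrite (sep_uniq hTf hv hu) in lv; lia.
Qed.
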